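(* Let $\mathbf{J}=(J_{ij})\in\mathbb{R}^{n\times n}$ be a real symmetric matrix with zero diagonal, let $\alpha>0$, and let $\beta$ satisfy $$\beta\ \ge\ \|\mathbf{J}+\alpha\mathbf{I}\|_\infty=\max_{1\le i\le n}\Big(\alpha+\sum_{j\ne i}|J_{ij}|\Big).$$ Let $\boldsymbol{x}^{(0)}\in\mathbb{R}^n$ be arbitrary and define $\boldsymbol{x}^{(k+1)}=\mathcal{T}(\boldsymbol{x}^{(k)})$ for $k\ge0$, where $\mathcal{T}(\boldsymbol{x})=\varphi(\beta^{-1}(\mathbf{J}+\alpha\mathbf{I})\boldsymbol{x})$ and $\varphi(z_1,\dots,z_n)=(\sqrt[3]{z_1},\dots,\sqrt[3]{z_n})$ (real cube roots). Then the sequence $\{\boldsymbol{x}^{(k)}\}$ is bounded. *)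

(* Defs.v *)
From HB Require Import structures.
From mathcomp Require Import all_boot all_order all_algebra.
From mathcomp Require Import all_classical all_reals exp.
Set Implicit Arguments. Unset Strict Implicit. Unset Printing Implicit Defensive.
Import Order.TTheory GRing.Theory Num.Theory.
Local Open Scope ring_scope.

Definition cbrt (R : realType) (z : R) : R := Num.sg z * (`|z| `^ (3%:R)^-1).

Definition phi (R : realType) (n : nat) (z : 'cV[R]_n) : 'cV[R]_n :=
  \col_i cbrt (z i 0).

Definition Tmap (R : realType) (n : nat) (J : 'M[R]_n) (alpha beta : R)
  (x : 'cV[R]_n) : 'cV[R]_n :=
  phi (beta^-1 *: ((J + alpha%:M) *m x)).

Definition iterT (R : realType) (n : nat) (J : 'M[R]_n) (alpha beta : R)
  (x0 : 'cV[R]_n) (k : nat) : 'cV[R]_n := iter k (Tmap J alpha beta) x0.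

(* Main.v *)
Require Import Defs.
From HB Require Import structures.
From mathcomp Require Import all_boot all_order all_algebra.
From mathcomp Require Import all_classical all_reals exp.
From mathcomp Require Import lra.
Import Order.TTheory GRing.Theory Num.Theory.
Local Open Scope ring_scope.

Lemma cbrt_le (R : realType) (M z : R) : 1 <= M -> `|z| <= M -> `|cbrt z| <= M.
Proof.
move=> M1 zM; rewrite /cbrt normrM normr_sg norm_powR ?normr_ge0 // normr_id.
apply: (le_trans (y := `|z| `^ (3%:R)^-1)).
  case: (z != 0); rewrite ?mul1r ?mul0r ?powR_ge0 //.
have [z1|z1] := leP 1 `|z|.
  apply: le_trans zM; apply: ler1_powR => //.
  by rewrite invf_le1 ?ltr0n // ler1n.
apply: le_trans M1.
have r0 : (0:R) <= (3%:R)^-1 by rewrite invr_ge0 ler0n.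
have h0 : `|z| \in Num.nneg by rewrite nnegrE normr_ge0.
have h1 : (1:R) \in Num.nneg by rewrite nnegrE ler01.
apply: le_trans (ge0_ler_powR r0 h0 h1 (ltW z1)) _.
by rewrite powR1.
Qed.

Lemma tail (R : realType) (n : nat) (J : 'M[R]_n) (alpha beta M : R) (i : 'I_n) :
  (forall i, J i i = 0) -> 0 < alpha -> 1 <= M ->
  alpha + \sum_(j < n | j != i) `|J i j| <= beta ->
  (\sum_i0 `|(J + alpha%:M) i i0|) * M <= beta * M.
Proof.
move=> Jd a0 M1 Hb.
have M0 : 0 <= M by apply: le_trans M1.
apply: ler_wpM2r => //.
apply: le_trans Hb.
rewrite (bigD1 i) //=.
have -> : `|(J + alpha%:M) i i| = alpha.
  by rewrite mxE [alpha%:M i i]mxE Jd eqxx mulr1n add0r ger0_norm // ltW.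
rewrite lerD2l; apply: ler_sum => j ji.
by rewrite mxE [alpha%:M i j]mxE eq_sym (negbTE ji) mulr0n addr0.
Qed.

Theorem propositionS10 (R : realType) (n : nat) (J : 'M[R]_n) (alpha beta : R)
  (x0 : 'cV[R]_n) :
  J^T = J ->
  (forall i, J i i = 0) ->
  0 < alpha ->
  (forall i : 'I_n, alpha + \sum_(j < n | j != i) `|J i j| <= beta) ->
  exists M : R, forall (k : nat) (i : 'I_n), `|iterT J alpha beta x0 k i 0| <= M.
Proof.
move=> _ Jd a0 Hb.
exists (1 + \sum_(i < n) `|x0 i 0|).
set M := 1 + _.
have M1 : 1 <= M by rewrite /M lerDl sumr_ge0 // => i _; exact: normr_ge0.
elim=> [|k IH] i.
  rewrite /iterT /= /M (bigD1 i) //=.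
  have : 0 <= \sum_(j < n | j != i) `|x0 j 0| by rewrite sumr_ge0 // => j _; exact: normr_ge0.
  lra.
have b0 : 0 < beta.
  have := Hb i.
  have : 0 <= \sum_(j < n | j != i) `|J i j| by rewrite sumr_ge0 // => j _; exact: normr_ge0.
  lra.
rewrite /iterT iterS -/(iterT J alpha beta x0 k).
set x := iterT J alpha beta x0 k in IH *.
rewrite /Tmap /phi mxE; apply: cbrt_le => //.
rewrite !mxE normrM ger0_norm ?invr_ge0 ?(ltW b0) //.
rewrite ler_pdivrMl // mulrC.
apply: (le_trans (ler_norm_sum _ _ _)).
apply: (le_trans (y := \sum_j `|(J + alpha%:M) i j| * M)).
  apply: ler_sum => j _; rewrite normrM ler_wpM2l ?normr_ge0 //.
rewrite -mulr_suml [M * _]mulrC.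
exact: tail.
Qed.
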